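(* Let $\mu$ be a valuated matroid on $[n]$. (i) Let $f=(f_1,f_2):[n]\cup\{o\}\to([n]\cup\{o\})\times\mathbb{T}$ be a map with $f_1(i)=i$ for all $i$, and assume that for every $i\in[n]$ there is $k\in K$ with $f_2(i)=\mathrm{val}(k)$. Then for the associated weakly monomial matrix $A_f$, $\overline{\operatorname{trop}}(f^{-1}(\mu))=\mathrm{val}(A_f)\odot\overline{\operatorname{trop}}(\mu)$. (ii) Conversely, if $A_f\in K^{n\times n}$ is a full-rank diagonal matrix, its associated map $f$ satisfies $\overline{\operatorname{trop}}(f^{-1}(\mu))=\mathrm{val}(A_f)\odot\overline{\operatorname{trop}}(\mu)$.
   Context: $K$ is a field with non-Archimedean valuation $\mathrm{val}:K\to\mathbb{T}=\mathbb{R}\cup\{\infty\}$; $(\mathrm{val}(M)\odot v)_i=\min_j(\mathrm{val}(M_{ij})+v_j)$, applied pointwise to sets. Valuated matroid of rank $r$ on finite $E$: $\nu:\binom{E}{r}\to\mathbb{T}$, not identically $\infty$, with exchange property (for all $I,J$, $i\in I\setminus J$ there is $j\in J\setminus I$ with $\nu(I)+\nu(J)\ge\nu((I\setminus i)\cup j)+\nu((J\setminus j)\cup i)$), up to additive constants; $\overline{\operatorname{trop}}(\nu)\subseteq\mathbb{P}(\mathbb{T}^E)$ is the set of $x$ with $\min_e(C_\nu(I)_e+x_e)$ attained at least twice for all $I\in\binom{E}{r+1}$ with $C_\nu(I)\ne(\infty,\dots)$, where $C_\nu(I)_e=\nu(I\setminus e)$ for $e\in I$, $\infty$ else. Pointed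 matroid $\mu_o$: $\mu$ extended to $[n]\cup\{o\}$ with $o$ a loop. With $S=f_1([n]\cup\{o\})$, $f^{-1}(\mu)(B)=\mu_o|_S(f_1(B))+\sum_{i\in B}f_2(i)$ where $\mu_o|_S$ is the restriction of $\mu_o$ to $S$ and $|B|$ equals its rank; $\overline{\operatorname{trop}}(f^{-1}(\mu))$ denotes the projection to the coordinates in $[n]$ of its tropical linear space. Associated matrix of $f$: $(A_f)_{ij}=k_i$ if $f_1(i)=j\in[n]$ with $\mathrm{val}(k_i)=f_2(i)$, and $0$ otherwise. Associated map of a weakly monomial matrix $M$ (at most one nonzero entry per row): $f(o)=(o,\infty)$; $f(i)=(o,\infty)$ if row $i$ is zero; $f(i)=(j,\mathrm{val}(M_{ij}))$ if $M_{ij}\ne0$. *)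

(* Defs.v *)
From HB Require Import structures.
From mathcomp Require Import all_boot all_order all_algebra.
From mathcomp Require Import reals.
Set Implicit Arguments. Unset Strict Implicit. Unset Printing Implicit Defensive.
Import Order.TTheory GRing.Theory Num.Theory.
Local Open Scope ring_scope.

(* ---------- The tropical numbers T = R u {oo}: None encodes oo ---------- *)
Section Trop.
Variable R : realType.

Definition tadd (a b : option R) : option R :=
  match a, b with Some x, Some y => Some (x + y) | _, _ => None end.

Definition tle (a b : option R) : bool :=
  match a, b with
  | _, None => true
  | None, Some _ => false
  | Some x, Some y => x <= y
  end.

Definition tmin (a b : option R) : option R := if tle a b then a else b.

Definition is_valuation (K : fieldType) (val : K -> option R) : Prop :=
  [/\ forall x, val x = None <-> x = 0,
      forall x y, val (x * y) = tadd (val x) (val y) &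
      forall x y, tle (tmin (val x) (val y)) (val (x + y))].

Definition min_twice (E : finType) (g : E -> option R) : Prop :=
  exists e1 e2, [/\ e1 != e2, g e1 = g e2 & forall e, tle (g e1) (g e)].

Definition valuated_matroid (E : finType) (r : nat) (nu : {set E} -> option R)
  : Prop :=
  (exists B : {set E}, #|B| = r /\ nu B <> None) /\
  forall I J : {set E}, #|I| = r -> #|J| = r -> forall i, i \in I :\: J ->
    exists2 j, j \in J :\: I &
      tle (tadd (nu ((I :\ i) :|: [set j])) (nu ((J :\ j) :|: [set i])))
          (tadd (nu I) (nu J)).

Definition circ (E : finType) (nu : {set E} -> option R) (I : {set E}) (e : E)
  : option R := if e \in I then nu (I :\ e) else None.

(* tropical linear space, as the cone of representatives in T^E minus the
   all-oo vector; its image in P(T^E) is \overline{trop}(nu) *)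
Definition trop_space (E : finType) (r : nat) (nu : {set E} -> option R)
  (x : E -> option R) : Prop :=
  (exists e, x e <> None) /\
  forall I : {set E}, #|I| = r.+1 -> (exists e, circ nu I e <> None) ->
    min_twice (fun e => tadd (circ nu I e) (x e)).

Definition tshift (E : Type) (c : R) (x : E -> option R) : E -> option R :=
  fun e => tadd (Some c) (x e).

Definition proj_eq (E : Type) (S1 S2 : (E -> option R) -> Prop) : Prop :=
  (forall x, S1 x -> exists c y, S2 y /\ forall e, x e = tshift c y e) /\
  (forall y, S2 y -> exists c x, S1 x /\ forall e, y e = tshift c x e).

(* [n] u {o} is option 'I_n, with o = None *)
Definition pointed (n r : nat) (mu : {set 'I_n} -> option R)
  (B : {set option 'I_n}) : option R :=
  if (None \in B) || (#|B| != r) then None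
  else mu [set i | Some i \in B].

(* f^{-1}(mu)(B) = mu_o|_S (f_1(B)) + sum_{i in B} f_2(i).
   Here S = f_1([n] u {o}); in the theorem f_1 = id so S is everything and
   mu_o|_S = mu_o. *)
Definition preimage (n r : nat) (mu : {set 'I_n} -> option R)
  (f1 : option 'I_n -> option 'I_n) (f2 : option 'I_n -> option R)
  (B : {set option 'I_n}) : option R :=
  tadd (pointed r mu (f1 @: B)) (\big[tadd/Some 0]_(i in B) f2 i).

Definition trop_act (K : fieldType) (val : K -> option R) (n : nat)
  (M : 'M[K]_n) (v : 'I_n -> option R) : 'I_n -> option R :=
  fun i => \big[tmin/None]_(j < n) tadd (val (M i j)) (v j).

Definition assoc_matrix (K : fieldType) (val : K -> option R) (n : nat)
  (f1 : option 'I_n -> option 'I_n) (f2 : option 'I_n -> option R)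
  (A : 'M[K]_n) : Prop :=
  forall i j : 'I_n,
    (f1 (Some i) = Some j -> val (A i j) = f2 (Some i)) /\
    (f1 (Some i) <> Some j -> A i j = 0).

Definition weakly_monomial (K : fieldType) (n : nat) (M : 'M[K]_n) : Prop :=
  forall i j j', M i j != 0 -> M i j' != 0 -> j = j'.

Definition assoc_map1 (K : fieldType) (n : nat) (M : 'M[K]_n)
  (i : option 'I_n) : option 'I_n :=
  match i with
  | None => None
  | Some i => if [pick j | M i j != 0] is Some j then Some j else None
  end.

Definition assoc_map2 (K : fieldType) (val : K -> option R) (n : nat)
  (M : 'M[K]_n) (i : option 'I_n) : option R :=
  match i with
  | None => None
  | Some i => if [pick j | M i j != 0] is Some j then val (M i j) else None
  end.

Definition is_diagonal (K : fieldType) (n : nat) (M : 'M[K]_n) : Prop :=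
  forall i j, i != j -> M i j = 0.

End Trop.

(* Main.v *)
Require Import Defs.
From HB Require Import structures.
From mathcomp Require Import all_boot all_order all_algebra.
From mathcomp Require Import reals.
From mathcomp Require Import ring lra.
Set Implicit Arguments. Unset Strict Implicit. Unset Printing Implicit Defensive.
Import Order.TTheory GRing.Theory Num.Theory.
Local Open Scope ring_scope.

Section TropLemmas.
Variable R : realType.
Local Notation T := (option R).

Lemma taddC : commutative (@tadd R).
Proof. by case=> [a|] [b|] //=; rewrite addrC. Qed.
Lemma taddA : associative (@tadd R).
Proof. by case=> [a|] [b|] [c|] //=; rewrite addrA. Qed.
Lemma tadd0 : left_id (Some 0) (@tadd R).
Proof. by case=> [a|] //=; rewrite add0r. Qed.
Lemma taddN (a : T) : tadd None a = None. Proof. by []. Qed.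
Lemma taddNr (a : T) : tadd a None = None. Proof. by case: a. Qed.

HB.instance Definition _ := Monoid.isComLaw.Build T (Some 0) (@tadd R) taddA taddC tadd0.

Lemma tle_refl (a : T) : tle a a. Proof. by case: a => //= a; rewrite lexx. Qed.
Lemma tle_trans (a b c : T) : tle a b -> tle b c -> tle a c.
Proof. by case: a b c => [a|] [b|] [c|] //=; apply: le_trans. Qed.
Lemma tle_total (a b : T) : tle a b || tle b a.
Proof. by case: a b => [a|] [b|] //=; apply: le_total. Qed.
Lemma tle_anti (a b : T) : tle a b -> tle b a -> a = b.
Proof. by case: a b => [a|] [b|] //= h1 h2; congr Some; apply/eqP; rewrite eq_le h1 h2. Qed.
Lemma tleN (a : T) : tle a None. Proof. by case: a. Qed.
Lemma tleNl (a : T) : tle None a -> a = None. Proof. by case: a. Qed.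
Lemma tle_fin (a b : T) : tle a b -> b != None -> a != None.
Proof. by case: a b => [a|] [b|]. Qed.
Lemma tle_add2r (a b c : T) : tle a b -> tle (tadd a c) (tadd b c).
Proof. by case: a b c => [a|] [b|] [c|] //=; rewrite lerD2r. Qed.
Lemma tle_add2l (a b c : T) : tle a b -> tle (tadd c a) (tadd c b).
Proof. by rewrite ![tadd c _]taddC; apply: tle_add2r. Qed.
Lemma tle_add2rK (a b : T) (c : R) : tle (tadd a (Some c)) (tadd b (Some c)) -> tle a b.
Proof. by case: a b => [a|] [b|] //=; rewrite lerD2r. Qed.
Lemma tadd_injr (a b : T) (c : R) : tadd a (Some c) = tadd b (Some c) -> a = b.
Proof. by case: a b => [a|] [b|] //= [] /addIr ->. Qed.
Lemma tadd_neq0 (a b : T) : tadd a b != None -> a != None /\ b != None.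
Proof. by case: a b => [a|] [b|]. Qed.

Lemma tminC : commutative (@tmin R).
Proof.
move=> a b; rewrite /tmin; case: (boolP (tle a b)) => h1; case: (boolP (tle b a)) => h2 //.
  by apply: tle_anti.
by move: (tle_total a b); rewrite (negbTE h1) (negbTE h2).
Qed.
Lemma tmin_l (a b : T) : tle (tmin a b) a.
Proof. rewrite /tmin; case: ifP => h; first exact: tle_refl.
by move: (tle_total a b); rewrite h /=. Qed.
Lemma tmin_r (a b : T) : tle (tmin a b) b.
Proof. by rewrite tminC; apply: tmin_l. Qed.
Lemma tmin_glb (a b c : T) : tle c a -> tle c b -> tle c (tmin a b).
Proof. by rewrite /tmin; case: ifP. Qed.
Lemma tmin_case (a b : T) : tmin a b = a \/ tmin a b = b.
Proof. by rewrite /tmin; case: ifP; [left|right]. Qed.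
Lemma tminA : associative (@tmin R).
Proof.
move=> a b c; apply: tle_anti.
- apply: tmin_glb; first apply: tmin_glb; first exact: tmin_l.
  + by apply: (tle_trans (tmin_r _ _)); apply: tmin_l.
  + by apply: (tle_trans (tmin_r _ _)); apply: tmin_r.
- apply: tmin_glb; last apply: tmin_glb.
  + by apply: (tle_trans (tmin_l _ _)); apply: tmin_l.
  + by apply: (tle_trans (tmin_l _ _)); apply: tmin_r.
  + exact: tmin_r.
Qed.
Lemma tminN : left_id None (@tmin R).
Proof. by case. Qed.

HB.instance Definition _ := Monoid.isComLaw.Build T None (@tmin R) tminA tminC tminN.

Section Bigs.
Variable (I : finType).

Lemma big_tmin_le (P : pred I) (F : I -> T) i : P i ->
  tle (\big[@tmin R/None]_(j | P j) F j) (F i).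
Proof. by move=> Pi; rewrite (bigD1 i) //=; apply: tmin_l. Qed.

Lemma le_big_tmin (P : pred I) (F : I -> T) a : (forall j, P j -> tle a (F j)) ->
  tle a (\big[@tmin R/None]_(j | P j) F j).
Proof. by move=> h; elim/big_ind: _ => //; [apply: tleN | move=> x y; apply: tmin_glb]. Qed.

Lemma big_tmin_eq (P : pred I) (F : I -> T) i a : P i -> F i = a ->
  (forall j, P j -> tle a (F j)) -> \big[@tmin R/None]_(j | P j) F j = a.
Proof. by move=> Pi <- h; apply: tle_anti; [apply: big_tmin_le | apply: le_big_tmin]. Qed.

Lemma big_tmin_None (P : pred I) (F : I -> T) : (forall j, P j -> F j = None) ->
  \big[@tmin R/None]_(j | P j) F j = None.
Proof. by move=> h; rewrite big1. Qed.

Lemma ex_tmin (P : pred I) (F : I -> T) : (exists i, P i) ->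
  exists i, P i /\ forall j, P j -> tle (F i) (F j).
Proof.
move=> [i0 Pi0].
have : \big[@tmin R/None]_(j | P j) F j = None \/ exists i, P i /\ F i = \big[@tmin R/None]_(j | P j) F j.
  elim/big_rec: _ => [|i x Pi [->|[k [Pk hk]]]]; first by left.
  - by rewrite tminC tminN; right; exists i.
  - by case: (tmin_case (F i) x) => ->; right; [exists i| exists k].
case=> [hN|[i [Pi hi]]].
  exists i0; split => // j Pj.
  have := big_tmin_le F Pi0; rewrite hN => /tleNl ->.
  have := big_tmin_le F Pj; rewrite hN => /tleNl ->; exact: tle_refl.
by exists i; split => // j Pj; rewrite hi; apply: big_tmin_le.
Qed.

Lemma big_tadd_None (P : pred I) (F : I -> T) i : P i -> F i = None ->
  \big[@tadd R/Some 0]_(j | P j) F j = None.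
Proof. by move=> Pi h; rewrite (bigD1 i) //= h. Qed.

Lemma big_tadd_fin (P : pred I) (F : I -> T) : (forall i, P i -> F i != None) ->
  \big[@tadd R/Some 0]_(j | P j) F j != None.
Proof. by move=> h; elim/big_ind: _ => //; case=> [x|] [y|]. Qed.

End Bigs.

Lemma min_twice_fin (E : finType) (g : E -> T) e1 :
  min_twice g -> g e1 != None -> exists e, exists e', [/\ e != e', g e = g e', g e != None & forall f, tle (g e) (g f)].
Proof.
move=> [a [b [hab hg hmin]]] h; exists a, b; split => //.
by apply: tle_fin (hmin e1) h.
Qed.


Section Sets.
Variable E : finType.
Implicit Types (A K I : {set E}).

Ltac setsolve := apply/setP => x; rewrite !inE;
  repeat (case: eqP => [?|?]; subst); rewrite /= ?eqxx ?orbT ?orbF ?andbT ?andbF //;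
  try by match goal with H : is_true (?y != ?y) |- _ => by rewrite eqxx in H end.

Lemma setD1U1 K (a b : E) : a \notin K -> ((K :|: [set a]) :\ a) :|: [set b] = K :|: [set b].
Proof. move=> aK; setsolve. by rewrite (negbTE aK). Qed.

Lemma setD1D1U I (a b : E) : a \in I -> b != a -> ((I :\ a) :\ b) :|: [set a] = I :\ b.
Proof. by move=> aI ba; setsolve. Qed.

Lemma setU1D1 A (a b : E) : a != b -> (A :|: [set b]) :\ a = (A :\ a) :|: [set b].
Proof. by move=> ab; setsolve. Qed.

Lemma cardU1' A (a : E) : a \notin A -> #|A :|: [set a]| = #|A|.+1.
Proof. by move=> aA; rewrite setUC cardsU1 aA. Qed.

Lemma cardD1' A (a : E) : a \in A -> #|A| = #|A :\ a|.+1.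
Proof. by move=> aA; rewrite (cardsD1 a) aA. Qed.

End Sets.

Definition cov (E : finType) (mu : {set E} -> T) (J : {set E}) (g f : E) : T :=
  if f \in J :\ g then None else mu ((J :\ g) :|: [set f]).

Lemma cocirc (E : finType) (r : nat) (mu : {set E} -> T) (hmu : valuated_matroid r mu)
  (J : {set E}) (hJ : #|J| = r) (g : E) (hg : g \in J) (I : {set E}) (hI : #|I| = r.+1)
  (c : R) (f1 : E) :
  let H := fun f => tadd (circ mu I f) (tadd (Some c) (cov mu J g f)) in
  H f1 != None -> (forall f, tle (H f1) (H f)) -> exists f2, f2 != f1 /\ H f2 = H f1.
Proof.
move=> H hH hmin.
have hex := hmu.2.
have f1I : f1 \in I by apply/negPn/negP => h; move: hH; rewrite /H /circ (negbTE h).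
have f1K : f1 \notin J :\ g by apply/negP => h; move: hH; rewrite /H /cov h !taddNr.
have hK : #|(J :\ g) :|: [set f1]| = r by rewrite cardU1' // -hJ (cardD1' hg).
have hJE : #|I :\ f1| = r by apply/eqP; rewrite -eqSS -hI (cardD1' f1I).
have f1D : f1 \in ((J :\ g) :|: [set f1]) :\: (I :\ f1) by rewrite !inE eqxx /= orbT.
have [j hj] := hex _ _ hK hJE f1 f1D.
case/setDP: hj => /setD1P [jf1 jI] hjK.
have jK : j \notin J :\ g by apply: contra hjK => h; rewrite inE h.
rewrite setD1U1 // setD1D1U // => hle.
exists j; split => //.
apply: tle_anti; last exact: hmin.
have eH : forall f, f \in I -> f \notin J :\ g ->
   H f = tadd (Some c) (tadd (mu ((J :\ g) :|: [set f])) (mu (I :\ f))).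
  move=> f fI fK; rewrite /H /circ /cov fI (negbTE fK).
  by rewrite taddC -taddA.
rewrite (eH _ jI jK) (eH _ f1I f1K).
by apply: tle_add2l.
Qed.


Lemma lift (E : finType) (r : nat) (mu : {set E} -> T) (hmu : valuated_matroid r mu)
  (S : {set E}) (zS : E -> T) (J0 : {set E}) (hJ0S : J0 \subset S) (hJ0 : #|J0| = r)
  (hJ0f : mu J0 != None) (h0 : E) (h0S : h0 \in S) (h0f : zS h0 != None)
  (hcirc : forall I : {set E}, I \subset S -> #|I| = r.+1 ->
     (exists i, tadd (circ mu I i) (zS i) != None) ->
     min_twice (fun i => tadd (circ mu I i) (zS i))) :
  exists z, trop_space r mu z /\ forall i, i \in S -> z i = zS i.
Proof.
pose F := [set i in S | zS i == None].
pose B := [set J : {set E} | (J \subset S) && (#|J| == r) && (mu J != None)].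
have J0B : J0 \in B by rewrite inE hJ0S hJ0 eqxx hJ0f.
pose k := (\max_(J in B) #|J :&: F|)%N.
have hk : forall J, J \in B -> (#|J :&: F| <= k)%N.
  by move=> J hJ; exact: (@leq_bigmax_cond _ (fun J => J \in B) (fun J => #|J :&: F|) J hJ).
have [J1 J1B hJ1k] : {J1 : {set E} | J1 \in B & k = #|J1 :&: F|}.
  apply: eq_bigmax_cond; apply/card_gt0P; by exists J0.
pose Bk := [pred J | (J \in B) && (#|J :&: F| == k)].
pose zr g := odflt 0 (zS g).
pose mr J := odflt 0 (mu J).
pose key J := mr J - \sum_(g in J :\: F) zr g.
have J1Bk : Bk J1 by rewrite /Bk /= J1B -hJ1k eqxx.
have [J [JBk Jmin]] := ex_tmin (P := Bk) (fun J => Some (key J)) (ex_intro _ J1 J1Bk).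
move/andP: (JBk); rewrite inE => -[/andP [/andP [JS /eqP Jr] Jf] /eqP Jk].
have Jmin' : forall J', Bk J' -> key J <= key J' by move=> J' /Jmin.
pose G' := J :\: F.
pose z f := \big[@tmin R/None]_(g in G') tadd (Some (zr g - mr J)) (cov mu J g f).
have muJ : mu J = Some (mr J) by rewrite /mr; case: (mu J) Jf.
have zSfin : forall i, i \in S -> i \notin F -> zS i = Some (zr i).
  by move=> i iS; rewrite inE iS /= /zr; case: (zS i).
have zSF : forall i, i \in F -> zS i = None by move=> i; rewrite inE => /andP [_ /eqP].
have JSS : forall g, J :\ g \subset S by move=> g; apply: subset_trans (subD1set J g) JS.
have cardJ' : forall g i, g \in J -> i \notin J -> #|(J :\ g) :|: [set i]| = r.
  move=> g i gJ iJ; rewrite cardU1'; first by rewrite -Jr (cardD1' gJ).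
  by rewrite in_setD1 (negbTE iJ) andbF.
have J'S : forall g i, i \in S -> (J :\ g) :|: [set i] \subset S.
  by move=> g i iS; rewrite subUset JSS sub1set iS.
have ti : forall i, i \in J -> tadd (Some (zr i - mr J)) (cov mu J i i) = Some (zr i).
  move=> i iJ; rewrite /cov in_setD1 eqxx /= setUC setD1K // muJ /=.
  by congr Some; rewrite subrK.
have claimA : forall i, i \in S -> z i = zS i.
  move=> i iS.
  case: (boolP (i \in J)) => iJ; case: (boolP (i \in F)) => iF.
  - rewrite zSF // /z; apply: big_tmin_None => g; rewrite in_setD => /andP [gF gJ].
    have ig : i != g by apply/eqP => e; move: gF; rewrite -e iF.
    by rewrite /cov in_setD1 ig iJ taddNr.
  - rewrite (zSfin i iS iF) /z.
    apply: (big_tmin_eq (i:=i)); first by rewrite in_setD iF iJ.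
      exact: ti.
    move=> g; rewrite in_setD => /andP [gF gJ]; case: (g =P i) => [->|/eqP gi].
      rewrite ti //; exact: tle_refl.
    by rewrite /cov in_setD1 eq_sym gi iJ taddNr tleN.
  - rewrite zSF // /z; apply: big_tmin_None => g; rewrite in_setD => /andP [gF gJ].
    rewrite /cov in_setD1 (negbTE iJ) andbF.
    case e: (mu _) => [a|]; last by rewrite taddNr.
    exfalso.
    have J'B : (J :\ g) :|: [set i] \in B by rewrite inE J'S // cardJ' // eqxx e.
    have hI : ((J :\ g) :|: [set i]) :&: F = (J :&: F) :|: [set i].
      apply/setP => x; rewrite !(in_setI, in_setU, in_setD1, in_set1).
      case: (x =P i) => [->|/eqP xi]; first by rewrite iF !orbT.
      case: (x =P g) => [->|/eqP xg]; first by rewrite (negbTE gF) !andbF.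
      by rewrite /= !orbF.
    have := hk _ J'B; rewrite hI cardU1' ?Jk ?ltnn //.
    by rewrite in_setI (negbTE iJ).
  - rewrite (zSfin i iS iF).
    pose I' := J :|: [set i].
    have I'S : I' \subset S by rewrite subUset JS sub1set iS.
    have I'r : #|I'| = r.+1 by rewrite cardU1' // Jr.
    pose gg f := tadd (circ mu I' f) (zS f).
    have gi : gg i = Some (mr J + zr i).
      by rewrite /gg /circ /I' in_setU in_set1 eqxx orbT setUC setU1K // muJ (zSfin i iS iF).
    have lowJ : forall h, h \in J -> h \notin F ->
        tle (Some (mr J + zr i)) (tadd (mu ((J :\ h) :|: [set i])) (Some (zr h))).
      move=> h hJ hF.
      case e: (mu _) => [a|] //=.
      have hIF : ((J :\ h) :|: [set i]) :&: F = J :&: F.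
        apply/setP => x; rewrite !(in_setI, in_setU, in_setD1, in_set1).
        case: (x =P i) => [->|/eqP xi]; first by rewrite (negbTE iF) (negbTE iJ) !andbF.
        case: (x =P h) => [->|/eqP xh]; first by rewrite (negbTE hF) !andbF.
        by rewrite /= !orbF.
      have J'Bk : Bk ((J :\ h) :|: [set i]).
        by rewrite /Bk /= inE J'S // cardJ' // eqxx e /= hIF Jk eqxx.
      have mrJ' : mr ((J :\ h) :|: [set i]) = a by rewrite /mr e.
      have hD : ((J :\ h) :|: [set i]) :\: F = i |: ((J :\: F) :\ h).
        apply/setP => x; rewrite !(in_setD, in_setU, in_setD1, in_set1).
        case: (x =P i) => [->|/eqP xi]; first by rewrite (negbTE iF) /= ?orbT.
        by rewrite /= orbF; case: (x != h); case: (x \in F); case: (x \in J).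
      have hs : \sum_(g in (J :\ h :|: [set i]) :\: F) zr g =
                \sum_(g in J :\: F) zr g - zr h + zr i.
        rewrite hD big_setU1 /=; last by rewrite !inE (negbTE iJ) !andbF.
        rewrite [\sum_(g in J :\: F) zr g](big_setD1 h) /=; last by rewrite inE hF hJ.
        by lra.
      have := Jmin' _ J'Bk; rewrite /key mrJ' hs => hle.
      by lra.
    have glow : forall f, tle (Some (mr J + zr i)) (gg f).
      move=> f; case: (f =P i) => [->|/eqP fi]; first by rewrite gi tle_refl.
      rewrite /gg /circ; case: (boolP (f \in I')) => fI'; last exact: tleN.
      have fJ : f \in J by move: fI'; rewrite /I' in_setU in_set1 (negbTE fi) orbF.
      rewrite /I' setU1D1 //.
      case: (boolP (f \in F)) => fF; first by rewrite zSF // taddNr tleN.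
      by rewrite (zSfin f (subsetP JS f fJ) fF); apply: lowJ.
    have ggi : gg i != None by rewrite gi.
    have hmt := hcirc I' I'S I'r (ex_intro _ i ggi).
    have [e [e' [ee' gee' gef gemin]]] := min_twice_fin hmt ggi.
    have ge : gg e = Some (mr J + zr i).
      by apply: tle_anti; [rewrite -gi; apply: gemin | apply: glow].
    have [e2 [e2i ge2]] : exists e2, e2 != i /\ gg e2 = Some (mr J + zr i).
      case: (e =P i) => [ei|/eqP ei]; last by exists e.
      by exists e'; split; [rewrite -ei eq_sym | rewrite -ge; exact: (esym gee')].
    have e2I : e2 \in I'.
      by apply/negPn/negP => h; move: ge2; rewrite /gg /circ (negbTE h).
    have e2J : e2 \in J by move: e2I; rewrite /I' in_setU in_set1 (negbTE e2i) orbF.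
    have e2F : e2 \notin F by apply/negP => h; move: ge2; rewrite /gg zSF // taddNr.
    move: ge2; rewrite /gg /circ e2I /I' setU1D1 // (zSfin e2 (subsetP JS e2 e2J) e2F).
    case ea: (mu _) => [a|] //= [ha].
    rewrite /z; apply: (big_tmin_eq (i:=e2)); first by rewrite in_setD e2F e2J.
      by rewrite /cov in_setD1 (negbTE iJ) andbF ea /=; congr Some; lra.
    move=> g; rewrite in_setD => /andP [gF gJ].
    rewrite /cov in_setD1 (negbTE iJ) andbF.
    have := lowJ g gJ gF; case: (mu _) => [b|] //= hb.
    by lra.
have [g0 g0G] : exists g0, g0 \in G'.
  case: (pickP (mem G')) => [g0 g0G | hn]; first by exists g0.
  have zN : z h0 = None by apply: big_tmin_None => g gG; move: (hn g); rewrite /= gG.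
  by move: h0f; rewrite -(claimA h0 h0S) zN.
have r0 : (0 < r)%N.
  by rewrite -Jr; apply/card_gt0P; exists g0; move: g0G; rewrite in_setD => /andP [].
exists z; split => //; split.
  by exists h0; rewrite claimA //; apply/eqP.
move=> I hI _.
pose Gf f := tadd (circ mu I f) (z f).
have [fs [_ fsmin]] := ex_tmin (P := predT) Gf (ex_intro _ h0 isT).
case: (boolP (Gf fs == None)) => hfs.
  have allN : forall f, Gf f = None.
    by move=> f; apply: tleNl; rewrite -(eqP hfs); apply: fsmin.
  have : (1 < #|I|)%N by rewrite hI ltnS.
  case/card_gt1P => x [y [_ _ xy]].
  exists x, y; split => //; first by rewrite /Gf in allN; rewrite !allN.
  by move=> f; rewrite /Gf in allN; rewrite !allN tle_refl.
have zfs : z fs != None by have [] := tadd_neq0 hfs.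
have [gs [gsG gsmin]] : exists gs, gs \in G' /\
    forall g, g \in G' -> tle (tadd (Some (zr gs - mr J)) (cov mu J gs fs))
                              (tadd (Some (zr g - mr J)) (cov mu J g fs)).
  by apply: (ex_tmin (P := mem G')); exists g0.
have hz : z fs = tadd (Some (zr gs - mr J)) (cov mu J gs fs).
  by apply: (big_tmin_eq (i := gs)).
have gsJ : gs \in J by move: gsG; rewrite in_setD => /andP [].
pose H := fun f => tadd (circ mu I f) (tadd (Some (zr gs - mr J)) (cov mu J gs f)).
have GH : forall f, tle (Gf f) (H f).
  by move=> f; apply: tle_add2l; apply: big_tmin_le.
have HGfs : H fs = Gf fs by rewrite /H /Gf hz.
have hH1 : H fs != None by rewrite HGfs.
have hH2 : forall f, tle (H fs) (H f).
  by move=> f; rewrite HGfs; apply: tle_trans (fsmin f isT) (GH f).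
have [f2 [f2fs Hf2]] := cocirc hmu Jr gsJ hI hH1 hH2.
have Gf2 : Gf f2 = Gf fs.
  apply: tle_anti; last exact: fsmin.
  apply: (tle_trans (GH f2)).
  have -> : H f2 = H fs := Hf2.
  by rewrite HGfs tle_refl.
exists fs, f2; split => //; first by rewrite eq_sym.
by move=> f; apply: fsmin.
Qed.


Lemma tminNr : right_id None (@tmin R).
Proof. by move=> a; rewrite tminC tminN. Qed.

Lemma tadd_swap (a b c d : T) : tadd (tadd a b) (tadd c d) = tadd (tadd a d) (tadd c b).
Proof. by case: a b c d => [a|] [b|] [c|] [d|] //=; congr Some; ring. Qed.

Lemma memSome (n : nat) (A : {set 'I_n}) j : (Some j \in Some @: A) = (j \in A).
Proof. by rewrite mem_imset //; apply: Some_inj. Qed.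

Lemma memNone (n : nat) (A : {set 'I_n}) : (None \in Some @: A) = false.
Proof. by apply/negbTE/negP => /imsetP [x _]. Qed.

Lemma imD1 (n : nat) (A : {set 'I_n}) i : (Some @: A) :\ Some i = Some @: (A :\ i).
Proof.
apply/setP => -[j|]; last by rewrite in_setD1 !memNone andbF.
by rewrite in_setD1 !memSome in_setD1 (inj_eq Some_inj).
Qed.

Lemma decompS (n : nat) (B : {set option 'I_n}) : None \notin B ->
  B = Some @: [set i | Some i \in B].
Proof.
move=> NB; apply/setP => -[j|]; first by rewrite memSome inE.
by rewrite memNone; apply/negbTE.
Qed.

Lemma cardS (n : nat) (A : {set 'I_n}) : #|Some @: A| = #|A|.
Proof. by apply: card_imset; apply: Some_inj. Qed.

Section Pull.
Variables (n r : nat) (mu : {set 'I_n} -> T) (f1 : option 'I_n -> option 'I_n)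
  (f2 : option 'I_n -> T).
Hypothesis hf1 : forall i, f1 i = i.
Local Notation nu := (preimage r mu f1 f2).
Local Notation w := (fun i => f2 (Some i)).
Local Notation ws := (fun K : {set 'I_n} => \big[@tadd R/Some 0]_(i in K) f2 (Some i)).

Lemma nu_eq (B : {set option 'I_n}) : nu B = tadd (pointed r mu B) (\big[@tadd R/Some 0]_(j in B) f2 j).
Proof. by rewrite /preimage (eq_imset _ hf1) imset_id. Qed.

Lemma nu_NoneIn (B : {set option 'I_n}) : None \in B -> nu B = None.
Proof. by move=> h; rewrite nu_eq /pointed h. Qed.

Lemma nu_wNone (B : {set option 'I_n}) i : Some i \in B -> f2 (Some i) = None -> nu B = None.
Proof. by move=> h1 h2; rewrite nu_eq (big_tadd_None h1 h2) taddNr. Qed.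

Lemma nu_Some (K : {set 'I_n}) : #|K| = r -> nu (Some @: K) = tadd (mu K) (ws K).
Proof.
move=> hK; rewrite nu_eq /pointed memNone cardS hK eqxx /=.
have -> : [set i | Some i \in Some @: K] = K by apply/setP => i; rewrite inE memSome.
by rewrite big_imset //=; apply: in2W; apply: Some_inj.
Qed.

Lemma circ_nu (I' : {set 'I_n}) i : #|I'| = r.+1 ->
  circ nu (Some @: I') (Some i) =
  if i \in I' then tadd (mu (I' :\ i)) (ws (I' :\ i)) else None.
Proof.
move=> hI; rewrite /circ memSome; case: ifP => // iI.
rewrite imD1 nu_Some //.
by apply/eqP; rewrite -eqSS -hI (cardD1' iI).
Qed.

Lemma circ_nuN (I : {set option 'I_n}) : None \notin I -> circ nu I None = None.
Proof. by rewrite /circ => /negbTE ->. Qed.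

Lemma circ_comp (I' : {set 'I_n}) (x : option 'I_n -> T) (z : 'I_n -> T) : #|I'| = r.+1 ->
  (forall i, i \in I' -> x (Some i) = tadd (w i) (z i)) ->
  forall i, tadd (circ nu (Some @: I') (Some i)) (x (Some i)) =
            tadd (tadd (circ mu I' i) (z i)) (ws I').
Proof.
move=> hI hx i; rewrite circ_nu // /circ.
case: ifP => iI //; rewrite hx // (big_setD1 i iI) /=.
by rewrite tadd_swap.
Qed.

End Pull.


Lemma pick_other (E : finType) (g : E -> T) e e' u : e != e' -> g e = g e' ->
  exists e2, e2 != u /\ g e2 = g e.
Proof.
move=> ee' hg; case: (e =P u) => [eu|/eqP eu]; last by exists e.
by exists e'; split; [rewrite -eu eq_sym | rewrite hg].
Qed.

Lemma part_i (K : fieldType) (val : K -> T) (hval : is_valuation val) (n r : nat)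
  (mu : {set 'I_n} -> T) (hmu : valuated_matroid r mu)
  (f1 : option 'I_n -> option 'I_n) (f2 : option 'I_n -> T)
  (hf1 : forall i, f1 i = i)
  (hnu : exists B : {set option 'I_n}, #|B| = r /\ preimage r mu f1 f2 B <> None)
  (A : 'M[K]_n) (hA : assoc_matrix val f1 f2 A) :
  proj_eq
       (fun y : 'I_n -> option R =>
          exists x, trop_space r (preimage r mu f1 f2) x /\
                    forall i, y i = x (Some i))
       (fun y : 'I_n -> option R =>
          exists x, trop_space r mu x /\ forall i, y i = trop_act val A x i).
Proof.
case: hval => hv0 _ _.
have valN : val 0 = None by apply/hv0.
pose w i := f2 (Some i).
pose ws (K : {set 'I_n}) := \big[@tadd R/Some 0]_(i in K) f2 (Some i).
have tact : forall x i, trop_act val A x i = tadd (w i) (x i).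
  move=> x i; rewrite /trop_act (bigD1 i) //= big1 ?tminNr.
    by rewrite ((hA i i).1 (hf1 _)).
  move=> j ji; rewrite ((hA i j).2) ?valN //.
  by rewrite hf1 => -[e]; move: ji; rewrite e eqxx.
case: hnu => B0 [B0r B0f].
have NB0 : None \notin B0 by apply/negP => h; apply: B0f; apply: nu_NoneIn.
pose J0 := [set i | Some i \in B0].
have B0e : B0 = Some @: J0 := decompS NB0.
have J0r : #|J0| = r by rewrite -cardS -B0e.
have hB0 : preimage r mu f1 f2 B0 = tadd (mu J0) (ws J0) by rewrite B0e nu_Some.
have [muJ0 wsJ0] : mu J0 != None /\ ws J0 != None.
  by apply: tadd_neq0; rewrite -hB0; apply/eqP.
have J0w : forall i, i \in J0 -> w i != None.
  move=> i iJ; apply/eqP => h; move: wsJ0; rewrite /ws (big_tadd_None iJ h) //.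
split.
- move=> y [x [[xnz xcirc] hy]].
  exists 0, y; split; last by move=> e; rewrite /tshift tadd0.
  have loop : forall u, u \notin B0 ->
      (forall f, f \in B0 -> preimage r mu f1 f2 ((B0 :|: [set u]) :\ f) = None) ->
      x u = None.
    move=> u uB hf; apply/eqP/negP => /negP hxu.
    pose I := B0 :|: [set u].
    have Ir : #|I| = r.+1 by rewrite cardU1' // B0r.
    have cu : circ (preimage r mu f1 f2) I u = preimage r mu f1 f2 B0.
      by rewrite /circ /I in_setU in_set1 eqxx orbT setUC setU1K.
    have Gu : tadd (circ (preimage r mu f1 f2) I u) (x u) != None.
      by rewrite cu; case: (preimage _ _ _ _ B0) B0f => // a _; case: (x u) hxu.
    have hpre : exists e, circ (preimage r mu f1 f2) I e <> None.
      by exists u; rewrite cu.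
    have [e [e' [ee' gee' gef _]]] := min_twice_fin (xcirc I Ir hpre) Gu.
    have only : forall f, tadd (circ (preimage r mu f1 f2) I f) (x f) != None -> f = u.
      move=> f; case: (f =P u) => // /eqP fu.
      rewrite /circ; case: ifP => fI //.
      have fB : f \in B0 by move: fI; rewrite /I in_setU in_set1 (negbTE fu) orbF.
      by rewrite hf.
    move: ee'; rewrite (only e gef) (only e') ?eqxx //.
    by rewrite -gee'.
  have xNone : x None = None.
    apply: loop => // f fB; apply: nu_NoneIn => //.
    rewrite in_setD1 in_setU in_set1 eqxx orbT andbT.
    by apply: contraNneq NB0 => ->.
  have xw : forall i, w i = None -> x (Some i) = None.
    move=> i wi; apply: loop.
      by rewrite B0e memSome; apply/negP => /J0w; rewrite wi.
    move=> f fB; apply: (@nu_wNone n r mu f1 f2 hf1 _ i) => //.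
    rewrite in_setD1 in_setU in_set1 eqxx orbT andbT.
    apply/eqP => e; move: fB; rewrite -e B0e memSome => /J0w; by rewrite wi.
  pose S := [set i | w i != None].
  pose zS i := match w i, x (Some i) with Some a, Some b => Some (b - a) | _, _ => None end.
  have hxS : forall i, i \in S -> x (Some i) = tadd (w i) (zS i).
    move=> i; rewrite inE /zS; case: (w i) => [a|] // _.
    by case: (x (Some i)) => [b|] //=; rewrite addrC subrK.
  have hxS' : forall i, i \notin S -> x (Some i) = None.
    by move=> i; rewrite inE negbK => /eqP /xw.
  have J0S : J0 \subset S by apply/subsetP => i /J0w; rewrite inE.
  have [h0 [h0S h0f]] : exists h0, h0 \in S /\ zS h0 != None.
    case: xnz => -[h0|]; last by rewrite xNone.
    move=> hx; have h0S : h0 \in S by apply/negPn/negP => /hxS'.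
    exists h0; split => //.
    by have [] := tadd_neq0 (a := w h0) (b := zS h0); rewrite // -hxS //; apply/eqP.
  have hcirc : forall I : {set 'I_n}, I \subset S -> #|I| = r.+1 ->
     (exists i, tadd (circ mu I i) (zS i) != None) ->
     min_twice (fun i => tadd (circ mu I i) (zS i)).
    move=> I IS Ir [i0 hi0].
    have wsI : ws I != None.
      by apply: big_tadd_fin => i iI; move: (subsetP IS i iI); rewrite inE.
    case wsIe : (ws I) wsI => [c|] // _.
    have hG := @circ_comp n r mu f1 f2 hf1 I x zS Ir (fun i iI => hxS i (subsetP IS i iI)).
    have Gi0 : tadd (circ (preimage r mu f1 f2) (Some @: I) (Some i0)) (x (Some i0)) != None.
      by rewrite hG; move: wsIe; rewrite /ws => ->; case: (tadd _ _) hi0.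
    have hpre : exists e, circ (preimage r mu f1 f2) (Some @: I) e <> None.
      by exists (Some i0); apply/eqP; have [] := tadd_neq0 Gi0.
    have [e [e' [ee' gee' gef gmin]]] := min_twice_fin (xcirc _ (etrans (cardS I) Ir) hpre) Gi0.
    have GN : tadd (circ (preimage r mu f1 f2) (Some @: I) None) (x None) = None.
      by rewrite xNone taddNr.
    case: e ee' gee' gef gmin => [a|]; last by rewrite GN.
    case: e' => [b|] ee' gee' gef gmin; last by move: gef; rewrite gee' GN.
    have hG' : forall j, tadd (circ (preimage r mu f1 f2) (Some @: I) (Some j)) (x (Some j)) =
                      tadd (tadd (circ mu I j) (zS j)) (Some c).
      by move=> j; rewrite hG; move: wsIe; rewrite /ws => ->.
    exists a, b; split.
    + by apply: contra ee' => /eqP ->.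
    + by apply: (@tadd_injr _ _ c); rewrite -!hG'.
    + move=> f; apply: (@tle_add2rK _ _ c); rewrite -!hG'; exact: gmin.
  have [z [ztrop zSe]] := lift hmu J0S J0r muJ0 h0S h0f hcirc.
  exists z; split => // i; rewrite hy tact.
  case: (boolP (i \in S)) => iS; first by rewrite zSe // hxS.
  by rewrite hxS' //; move: iS; rewrite inE negbK => /eqP ->.
- move=> y [z [[znz zcirc] hy]].
  exists 0, y; split; last by move=> e; rewrite /tshift tadd0.
  pose x (o : option 'I_n) := if o is Some i then tadd (w i) (z i) else None.
  exists x; split; last by move=> i; rewrite hy tact.
  have [e0 ze0] := znz.
  split.
    case: (pickP (fun e => tadd (w e) (z e) != None)) => [e he|hn].
      by exists (Some e); apply/eqP.
    exfalso.
    have hn' : forall e, tadd (w e) (z e) = None by move=> e; move: (hn e) => /= /negbFE /eqP.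
    have we0 : w e0 = None by move: (hn' e0); case: (w e0) => //; case: (z e0) ze0.
    have e0J : e0 \notin J0 by apply/negP => /J0w; rewrite we0.
    pose I := J0 :|: [set e0].
    have Ir : #|I| = r.+1 by rewrite cardU1' // J0r.
    have ce0 : circ mu I e0 = mu J0.
      by rewrite /circ /I in_setU in_set1 eqxx orbT setUC setU1K.
    have Ge0 : tadd (circ mu I e0) (z e0) != None.
      by rewrite ce0; case: (mu J0) muJ0 => // a _; case: (z e0) ze0.
    have hpre : exists e, circ mu I e <> None by exists e0; rewrite ce0; apply/eqP.
    have [e [e' [ee' gee' gef _]]] := min_twice_fin (zcirc I Ir hpre) Ge0.
    have [e2 [e2e0 ge2]] := @pick_other _ (fun f => tadd (circ mu I f) (z f)) e e' e0 ee' gee'.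
    have : tadd (circ mu I e2) (z e2) != None by rewrite ge2.
    rewrite /circ; case: ifP => e2I //.
    have e2J : e2 \in J0 by move: e2I; rewrite /I in_setU in_set1 (negbTE e2e0) orbF.
    move=> /tadd_neq0 [_ ze2].
    by move: (hn' e2); case: (w e2) (J0w e2 e2J) => // a _; case: (z e2) ze2.
  move=> I Ir hpre.
  pose G f := tadd (circ (preimage r mu f1 f2) I f) (x f).
  have allN : (forall f, G f = None) -> min_twice G.
    move=> hN; exists None, (Some e0); split => //; first by rewrite !hN.
    by move=> f; rewrite !hN tle_refl.
  case: (boolP (None \in I)) => NI.
    apply: allN => -[i|]; last by rewrite /G taddNr.
    rewrite /G /circ; case: ifP => // iI.
    rewrite nu_NoneIn //.
    by rewrite in_setD1 NI andbT.
  pose I' := [set i | Some i \in I].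
  have Ie : I = Some @: I' := decompS NI.
  have I'r : #|I'| = r.+1 by rewrite -cardS -Ie.
  have hG := @circ_comp n r mu f1 f2 hf1 I' x z I'r (fun i _ => erefl).
  have GN : G None = None by rewrite /G taddNr.
  case wsIe : (ws I') => [c|]; last first.
    apply: allN => -[i|] //; rewrite /G Ie hG.
    by move: wsIe; rewrite /ws => ->; rewrite taddNr.
  have hG' : forall j, G (Some j) = tadd (tadd (circ mu I' j) (z j)) (Some c).
    by move=> j; rewrite /G Ie hG; move: wsIe; rewrite /ws => ->.
  have hpre' : exists e, circ mu I' e <> None.
    case: hpre => -[i|]; last by rewrite /circ (negbTE NI).
    rewrite Ie circ_nu //; case: ifP => // iI h.
    exists i; rewrite /circ iI => hm; apply: h; by rewrite hm.
  have [a [b [ab gab gmin]]] := zcirc I' I'r hpre'.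
  exists (Some a), (Some b); split.
  + by apply: contra ab => /eqP [->].
  + by change (G (Some a) = G (Some b)); rewrite !hG' gab.
  + case=> [j|]; last by change (tle (G (Some a)) (G None)); rewrite GN tleN.
    change (tle (G (Some a)) (G (Some j))).
    by rewrite !hG'; apply: tle_add2r; apply: gmin.
Qed.

End TropLemmas.

Unset Implicit Arguments.

Theorem lemma2p23 (R : realType) (K : fieldType) (val : K -> option R)
  (hval : is_valuation val) (n r : nat) (mu : {set 'I_n} -> option R)
  (hmu : valuated_matroid r mu) :
  (* (i) *)
  (forall (f1 : option 'I_n -> option 'I_n) (f2 : option 'I_n -> option R),
     (forall i, f1 i = i) ->
     (forall i : 'I_n, exists k : K, f2 (Some i) = val k) ->
     (exists B : {set option 'I_n}, #|B| = r /\ preimage r mu f1 f2 B <> None) ->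
     forall A : 'M[K]_n, assoc_matrix val f1 f2 A ->
     proj_eq
       (fun y : 'I_n -> option R =>
          exists x, trop_space r (preimage r mu f1 f2) x /\
                    forall i, y i = x (Some i))
       (fun y : 'I_n -> option R =>
          exists x, trop_space r mu x /\ forall i, y i = trop_act val A x i))
  /\
  (* (ii) *)
  (forall A : 'M[K]_n, is_diagonal A -> A \in unitmx ->
     proj_eq
       (fun y : 'I_n -> option R =>
          exists x, trop_space r (preimage r mu (assoc_map1 A) (assoc_map2 val A)) x /\
                    forall i, y i = x (Some i))
       (fun y : 'I_n -> option R =>
          exists x, trop_space r mu x /\ forall i, y i = trop_act val A x i)).
Proof.
split.
  move=> f1 f2 hf1 _ hnu A hA; exact: part_i.
move=> A hdiag hunit.
have Ad : A = diag_mx (\row_i A i i).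
  apply/matrixP => i j; rewrite !mxE; case: (i =P j) => [->|/eqP ij].
    by rewrite mulr1n.
  by rewrite hdiag // mulr0n.
have Aii : forall i, A i i != 0.
  move=> i; apply/negP => /eqP h.
  move: hunit; rewrite unitmxE unitfE Ad det_diag => /negP; apply.
  by apply/prodf_eq0; exists i => //; rewrite mxE h.
have pk : forall i, [pick j | A i j != 0] = Some i.
  move=> i; case: pickP => [j hj|hn]; last by move: (hn i) (Aii i) => /= ->.
  congr Some; apply/eqP; rewrite eq_sym; apply: contraR hj => ij.
  by rewrite hdiag // eqxx.
have hf1 : forall i, assoc_map1 A i = i by case=> [i|] //=; rewrite pk.
have hf2 : forall i, assoc_map2 val A (Some i) = val (A i i) by move=> i /=; rewrite pk.
case: (hval) => hv0 _ _.
apply: part_i => //.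
- case: (hmu) => -[J0 [J0r J0f]] _.
  exists (Some @: J0); split; first by rewrite cardS.
  rewrite nu_Some //.
  have : \big[@tadd R/Some 0]_(i in J0) assoc_map2 val A (Some i) != None.
    apply: big_tadd_fin => i _; rewrite hf2; apply/eqP => /hv0 /eqP; exact/negP/Aii.
  by case: (mu J0) J0f => // a _; case: (\big[_/_]_(_ in _) _).
- move=> i j; split.
    by rewrite hf1 => -[<-]; rewrite hf2.
  by rewrite hf1 => h; apply: hdiag; apply/eqP => e; apply: h; rewrite e.
Qed.
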